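(* Let $0\le k_1\le k_2$ be integers and $m$ a positive integer, and suppose there exists a perfect $B[-k_1,k_2](m)$ set. Suppose also that $p$ is a prime and $a>0$ an integer with $p\mid m$ and $a\mid p-1$. Let $r$ be a positive integer with $\gcd(a(k_1+k_2),r)=1$ and $p\mid a(k_1+k_2)+r$. If $r\le a$ and $\lfloor k_1/p\rfloor+\lfloor k_2/p\rfloor=\lfloor (k_1+k_2)/p\rfloor$, then $a(k_1+k_2)+r \mid m$.
   Context: For a positive integer $q$, $\mathbb{Z}_q$ is the ring of integers modulo $q$. For integers $a\le b$, $[a,b]^\ast=\{a,a+1,\dots,b\}\setminus\{0\}$. For non-negative integers $0\le k_1\le k_2$ and a positive integer $q$, a set $B\subseteq\mathbb{Z}_q$ is a $B[-k_1,k_2](q)$ set (splitter set) if, for each $b\in B$, the set $\{ab \bmod q: a\in[-k_1,k_2]^\ast\}$ consists of $k_1+k_2$ distinct nonzero elements, and these sets are pairwise disjoint for distinct $b\in B$. Such a set is perfect if $|B|=(q-1)/(k_1+k_2)$; equivalently, every nonzero element of $\mathbb{Z}_q$ has a unique representation $ab$ with $a\in[-k_1,k_2]^\ast$, $b\in B$ (and $0$ has no such representation). *)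

(* Defs.v *)
From mathcomp Require Import all_boot all_order all_algebra.
Set Implicit Arguments. Unset Strict Implicit. Unset Printing Implicit Defensive.
Import Order.TTheory GRing.Theory Num.Theory.
Local Open Scope ring_scope.

(* Elements of Z_q are represented by the ordinals 'I_q (residues 0..q-1).
   [-k1,k2]^* : the nonzero integers a with -k1 <= a <= k2. *)
Definition multset (k1 k2 : nat) : seq int :=
  [seq a <- [seq (i%:Z - k1%:Z) | i <- iota 0 (k1 + k2).+1] | a != 0].

Definition mulmod (q : nat) (a : int) (b : 'I_q) : int := ((a * (b : nat)%:Z) %% q%:Z)%Z.

Definition splitter (k1 k2 q : nat) (B : {set 'I_q}) : Prop :=
  (forall b, b \in B ->
     uniq [seq mulmod a b | a <- multset k1 k2] /\
     (forall a, a \in multset k1 k2 -> mulmod a b != 0)) /\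
  (forall b b', b \in B -> b' \in B -> b != b' ->
     forall a a', a \in multset k1 k2 -> a' \in multset k1 k2 ->
       mulmod a b != mulmod a' b').

Definition perfect_splitter (k1 k2 q : nat) (B : {set 'I_q}) : Prop :=
  @splitter k1 k2 q B /\ (#|B| * (k1 + k2) = q - 1)%N.

(* Main.v *)
Require Import Defs.
From mathcomp Require Import all_boot all_order all_algebra.
From mathcomp Require Import zify ring.
Import Order.TTheory GRing.Theory Num.Theory.

Lemma arith (n m p a r g g' : nat) :
  prime p -> 0 < m -> p %| m -> 0 < a -> a %| p - 1 -> 0 < r ->
  coprime (a * n) r -> p %| a * n + r -> r <= a ->
  (g + g') * n = m - 1 -> m.-1 %/ p = g * n + g' * (n %/ p) ->
  a * n + r %| m.
Proof.
move=> pp m0 pm a0 apm r0 cop pN ra E1 E2.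
have p1 := prime_gt1 pp.
case/dvdnP: pm => q mq.
have q0 : 0 < q by rewrite lt0n; apply/negP => /eqP q0; rewrite mq q0 in m0.
have E2' : m.-1 %/ p = q.-1.
  have -> : m.-1 = q.-1 * p + p.-1.
    clear -mq q0 p1; rewrite mq; clear mq; case: q q0 => // q' _ /=; rewrite mulSn; lia.
  by rewrite divnMDl ?(ltnW p1) // divn_small ?addn0 // prednK // ltnW.
rewrite E2' in E2.
case/dvdnP: apm => d pd.
have d0 : 0 < d by case: d pd => //= H; lia.
set c := n %/ p in E2; set s := n %% p.
have ns : n = c * p + s by rewrite /c /s -divn_eq.
have sp : s < p by rewrite ltn_pmod // ltnW.
have ps : p = d * a + 1 by lia.
have srd : s = r * d.
  case/dvdnP: pN => e He.
  have E3 : e * p = (a * c) * p + (a * s + r) by rewrite -He ns mulnDr mulnA addnA.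
  have Has : a * s + r = (e - a * c) * p by rewrite mulnBl E3 addKn.
  set t := e - a * c in Has.
  have Hx : r * d + p * s = s + p * (d * t).
    rewrite ps.
    have -> : (d*a+1)*(d*t) = d * (t * (d*a+1)) by ring.
    rewrite -ps -Has ps; ring.
  have := congr1 (modn^~ p) Hx.
  rewrite /= (addnC (r * d)) (addnC s) !(mulnC p) !modnMDl !modn_small //.
  have : r * d <= a * d by rewrite leq_mul2r ra orbT.
  lia.
have F : (g+g')*n + 1 = (g*n + g'*c + 1) * p.
  rewrite E1 subnK // mq; congr (_ * _); rewrite -E2 addn1 prednK //.
have Ht : g' * r * d = a * d * (g * n + 1).
  apply/eqP; rewrite -(eqn_add2r (g*n + g'*c * p + 1)); apply/eqP.
  have Hn : g'*n = g'*c * p + g'*r * d by rewrite ns srd; ring.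
  have -> : g' * r * d + (g * n + g' * c * p + 1) = (g+g')*n + 1.
    have -> : (g+g')*n + 1 = g*n + g'*n + 1 by ring.
    rewrite Hn; ring.
  rewrite F ps; ring.
have Ht2 : g' * r = a * (g * n + 1).
  apply/eqP; rewrite -(eqn_pmul2r d0); apply/eqP.
  rewrite Ht; ring.
have aq : a * q = g' * (a * c + r).
  have -> : q = g * n + g' * c + 1 by rewrite -E2 addn1 prednK.
  have -> : g' * (a * c + r) = a * c * g' + g' * r by ring.
  rewrite Ht2; ring.
have Nm : a * n + r = p * (a * c + r) by rewrite ns srd ps; ring.
rewrite Nm mq mulnC dvdn_pmul2r ?(ltnW p1) //.
have cop2 : coprime (a * c + r) a.
  rewrite coprime_sym -coprime_modr mulnC modnMDl coprime_modr.
  by move: cop; rewrite coprimeMl => /andP[].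
by rewrite -(Gauss_dvdr _ cop2) aq dvdn_mull.
Qed.

Lemma multset_split k1 k2 : multset k1 k2 =
  [seq (- Posz (k1 - i)%N)%R | i <- iota 0 k1] ++ [seq Posz j.+1 | j <- iota 0 k2].
Proof.
rewrite /multset -addnS iotaD map_cat filter_cat add0n.
congr (_ ++ _).
  transitivity [seq x <- [seq (- Posz (k1 - i)%N)%R | i <- iota 0 k1] | x != 0%R].
    congr filter; apply/eq_in_map => i; rewrite mem_iota => /andP[_ hi].
    apply/eqP; rewrite add0n in hi; lia.
  apply/all_filterP/allP => x /mapP [i].
  rewrite mem_iota => /andP[_ hi] ->; rewrite add0n in hi; apply/eqP; lia.
rewrite /= subrr /= -[k1.+1]addn0 iotaDl -map_comp.
transitivity [seq x <- [seq Posz j.+1 | j <- iota 0 k2] | x != 0%R].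
  congr filter; apply: eq_map => j /=; apply/eqP; lia.
by apply/all_filterP/allP => x /mapP [i _ ->].
Qed.

Lemma cnt_neg p k : 0 < p -> count (fun i => p %| k - i) (iota 0 k) = k %/ p.
Proof.
move=> p0; elim: k => [|k IH]; first by rewrite div0n.
rewrite -addn1 addnC iotaD /= add0n -add1n iotaDl count_map.
rewrite (eq_count (a2 := fun i => p %| k - i)); last first.
  by move=> i /=; rewrite add1n addnC addn1 subSS.
by rewrite IH subn0 add1n divnS.
Qed.

Lemma cnt_pos p k : 0 < p -> count (fun j => p %| j.+1) (iota 0 k) = k %/ p.
Proof.
move=> p0; elim: k => [|k IH]; first by rewrite div0n.
by rewrite -addn1 iotaD count_cat IH /= add0n addn0 addn1 divnS // addnC.
Qed.

Lemma cnt_mult p k1 k2 : 0 < p ->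
  count (fun a : int => p %| `|a|%N) (multset k1 k2) = k1 %/ p + k2 %/ p.
Proof.
move=> p0; rewrite multset_split count_cat !count_map.
rewrite (eq_count (a2 := fun i => p %| k1 - i)); last by move=> i /=; rewrite abszN.
by rewrite cnt_neg // cnt_pos.
Qed.

Lemma size_mult k1 k2 : size (multset k1 k2) = (k1 + k2)%N.
Proof. by rewrite multset_split size_cat !size_map !size_iota. Qed.

Lemma Pmul (m p : nat) (a : int) (b : 'I_m) : prime p -> p %| m ->
  (Posz p %| mulmod a b)%Z = (p %| `|a|%N) || (p %| b).
Proof.
move=> pp pm; rewrite /mulmod.
set x := (a * Posz (b : nat))%R.
have Hpm : (Posz p %| Posz m)%Z by rewrite dvdzE.
rewrite -(rpredDl (x %% Posz m)%Z (dvdz_mull (x %/ Posz m)%Z Hpm)) -divz_eq.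
by rewrite dvdzE abszM Euclid_dvdM.
Qed.

Theorem lemma3p4 (k1 k2 m p a r : nat) :
  (k1 <= k2)%N -> (0 < m)%N ->
  (exists B : {set 'I_m}, @perfect_splitter k1 k2 m B) ->
  prime p -> (0 < a)%N -> (p %| m)%N -> (a %| p - 1)%N ->
  (0 < r)%N -> coprime (a * (k1 + k2)) r -> (p %| a * (k1 + k2) + r)%N ->
  (r <= a)%N -> (k1 %/ p + k2 %/ p = (k1 + k2) %/ p)%N ->
  (a * (k1 + k2) + r %| m)%N.
Proof.
move=> hk hm [B [[Hsp Hdisj] Hcard]] pp a0 pm apm r0 cop pN ra hfl.
have p0 := prime_gt0 pp.
set n := (k1 + k2)%N in cop pN hfl Hcard *.
pose g := \sum_(b in B) (p %| b : nat).
pose g' := \sum_(b in B) (~~ (p %| b) : nat).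
apply: (@arith n m p a r g g') => //.
  rewrite -Hcard; congr (_ * _).
  rewrite -big_split /= -sum1_card; apply: eq_bigr => b _; by case: (p %| b).
pose S (b : 'I_m) := [seq mulmod x b | x <- multset k1 k2].
pose L := flatten [seq S b | b <- enum B].
pose P := fun x : int => (Posz p %| x)%Z.
have countL : forall Q, count Q L = \sum_(b in B) count Q (S b).
  by move=> Q; rewrite count_flatten -map_comp sumnE big_map big_enum.
have sizeL : size L = m.-1.
  rewrite -count_predT countL.
  rewrite (eq_bigr (fun _ => n)); last by move=> b _; rewrite count_predT size_map size_mult.
  by rewrite sum_nat_const Hcard subn1.
have uniqL : uniq L.
  rewrite /L; have : {subset enum B <= B} by move=> b; rewrite mem_enum.
  have : uniq (enum B) := enum_uniq _.
  elim: (enum B) => [|b s IH] //= /andP[bs us] sB.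
  rewrite cat_uniq IH ?us ?andbT; last by move=> x xs; apply: sB; rewrite inE xs orbT.
  have bB : b \in B by apply: sB; rewrite inE eqxx.
  rewrite (proj1 (Hsp b bB)) /=.
  apply/hasPn => x.
  move=> /flattenP [z /mapP [b' b's ->]] /mapP [y' y'm ->].
  apply/mapP => -[y ym] /eqP; apply/negP.
  apply: Hdisj => //; first by apply: sB; rewrite inE b's orbT.
  by apply/eqP => bb; rewrite -bb b's in bs.
  by [].
pose I := [seq Posz i | i <- iota 1 m.-1].
have subLI : {subset L <= I}.
  move=> x /flattenP [z /mapP [b0 b0B ->]] /mapP [y ym ->].
  rewrite mem_enum in b0B.
  have nz := (proj2 (Hsp b0 b0B)) y ym.
  have ge0 : (0 <= mulmod y b0)%R by rewrite /mulmod modz_ge0 // lt0n_neq0.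
  have lt : (mulmod y b0 < Posz m)%R by rewrite /mulmod ltz_pmod.
  move: nz ge0 lt; case: (mulmod y b0) => // xn nz _ lt.
  apply/mapP; exists xn => //; rewrite mem_iota; rewrite ltz_nat in lt.
  have : xn != 0%N by apply: contra nz => /eqP ->.
  lia.
have szIL : size I <= size L by rewrite size_map size_iota sizeL.
have [_ eqLI] := uniq_min_size uniqL subLI szIL.
have permLI : perm_eq L I.
  by apply: uniq_perm => //; rewrite map_inj_uniq ?iota_uniq // => x y [].
have E2a : count P I = m.-1 %/ p.
  rewrite /I; have -> : iota 1 m.-1 = map (addn 1) (iota 0 m.-1) by rewrite -iotaDl.
  rewrite -(@cnt_pos p m.-1 p0) !count_map; apply: eq_count => j /=.
  by rewrite /P dvdzE add1n.
rewrite -E2a -(permP permLI) countL.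
have -> : n %/ p = (k1 %/ p + k2 %/ p)%N by rewrite hfl.
rewrite /g /g' !big_distrl -big_split /=; apply: eq_bigr => b bB.
rewrite /S count_map (eq_count (a2 := fun x => (p %| `|x|%N) || (p %| b))); last first.
  by move=> x /=; rewrite /P Pmul.
case: (p %| b) => /=.
  rewrite (eq_count (a2 := predT)); last by move=> x; rewrite orbT.
  by rewrite count_predT size_mult mul1n mul0n addn0.
rewrite (eq_count (a2 := fun x : int => p %| `|x|%N)); last by move=> x; rewrite orbF.
by rewrite cnt_mult // mul0n mul1n.
Qed.
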